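(* Let $g,h\in\mathcal{G}$ with $\Theta(g,h)<\infty$. If $g$ is slow-dropping and slow-jumping, then so is $h$.
   Context: $\mathcal{G}=\{g:\mathbb{Z}_{\ge0}\to\mathbb{R}: g(0)=0,\ g(1)=1,\ g(x)>0\ \forall x>0\}$. For $g,h\in\mathcal{G}$, $\Theta(g,h)=\sup_{x\in\mathbb{N}}|\log g(x)-\log h(x)|$ (an extended metric). $g$ is slow-jumping if for every $\alpha>0$ there is $N>0$ such that for all positive integers $x<y$ with $y\ge N$, $g(y)\le \lfloor y/x\rfloor^{2+\alpha}x^\alpha g(x)$. $g$ is slow-dropping if for every $\alpha>0$ there is $N>0$ such that for all $x<y$ with $y\ge N$, $g(y)\ge g(x)/y^\alpha$. *)

(* Defs.v *)
From Stdlib Require Import Reals Lra Lia.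
Open Scope R_scope.

Definition inG (g : nat -> R) : Prop :=
  g 0%nat = 0 /\ g 1%nat = 1 /\ forall x : nat, (0 < x)%nat -> 0 < g x.

(* Theta(g,h) < infinity : the sup over positive integers x of
   |log g x - log h x| is finite, i.e. these values are bounded. *)
Definition Theta_finite (g h : nat -> R) : Prop :=
  exists C : R, forall x : nat, (1 <= x)%nat -> Rabs (ln (g x) - ln (h x)) <= C.

Definition slow_jumping (g : nat -> R) : Prop :=
  forall alpha : R, 0 < alpha ->
  exists N : nat, (0 < N)%nat /\
    forall x y : nat, (0 < x)%nat -> (x < y)%nat -> (N <= y)%nat ->
      g y <= Rpower (INR (y / x)) (2 + alpha) * Rpower (INR x) alpha * g x.

Definition slow_dropping (g : nat -> R) : Prop :=
  forall alpha : R, 0 < alpha ->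
  exists N : nat, (0 < N)%nat /\
    forall x y : nat, (0 < x)%nat -> (x < y)%nat -> (N <= y)%nat ->
      g x / Rpower (INR y) alpha <= g y.

(* Main.v *)
Require Import Defs.
From Stdlib Require Import Reals.
From Stdlib Require Import Lra Lia.
Open Scope R_scope.

Lemma Rpower_pos' a b : 0 < Rpower a b.
Proof. unfold Rpower; apply exp_pos. Qed.

Lemma large (b M : R) : 0 < b ->
  exists N1 : nat, (0 < N1)%nat /\ forall n : nat, (N1 <= n)%nat -> M <= Rpower (INR n) b.
Proof.
  intros Hb.
  pose (T := Rpower (Rmax M 1) (Rinv b)).
  destruct (INR_unbounded T) as [n0 Hn0].
  exists (S n0). split; [lia|]. intros n Hn.
  assert (HT : 0 < T) by apply Rpower_pos'.
  assert (INR n0 <= INR n) by (apply le_INR; lia).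
  apply Rle_trans with (Rpower T b).
  - unfold T. rewrite Rpower_mult. replace (/ b * b) with 1 by (field; lra).
    rewrite Rpower_1 by (pose proof (Rmax_r M 1); lra).
    apply Rmax_l.
  - apply Rle_Rpower_l; lra.
Qed.

Lemma bound_hg (g h : nat -> R) C x : inG g -> inG h -> (1 <= x)%nat ->
  Rabs (ln (g x) - ln (h x)) <= C -> h x <= exp C * g x /\ g x <= exp C * h x.
Proof.
  intros [_ [_ Pg]] [_ [_ Ph]] Hx HC.
  pose proof (Pg x ltac:(lia)). pose proof (Ph x ltac:(lia)).
  pose proof (Rle_abs (ln (g x) - ln (h x))). pose proof (Rle_abs (- (ln (g x) - ln (h x)))). rewrite Rabs_Ropp in *.
  split.
  - rewrite <- (exp_ln (h x)) by lra. rewrite <- (exp_ln (g x)) by lra.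
    rewrite <- exp_plus.
    destruct (Req_dec (ln (h x)) (C + ln (g x))) as [E|E]; [rewrite E; lra|].
    left; apply exp_increasing; lra.
  - rewrite <- (exp_ln (g x)) by lra. rewrite <- (exp_ln (h x)) by lra.
    rewrite <- exp_plus.
    destruct (Req_dec (ln (g x)) (C + ln (h x))) as [E|E]; [rewrite E; lra|].
    left; apply exp_increasing; lra.
Qed.

Theorem proposition63 (g h : nat -> R) :
  inG g -> inG h -> Theta_finite g h ->
  slow_dropping g -> slow_jumping g ->
  slow_dropping h /\ slow_jumping h.
Proof.
  intros Gg Gh [C HC] SD SJ.
  remember (exp C) as K eqn:EK.
  assert (HK : 0 < K) by (rewrite EK; apply exp_pos).
  assert (Hb : forall x, (1 <= x)%nat -> h x <= K * g x /\ g x <= K * h x)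
    by (intros x Hx; rewrite EK; apply (bound_hg g h C x Gg Gh Hx (HC x Hx))).
  destruct Gg as [_ [_ Pg]]. destruct Gh as [_ [_ Ph]].
  split.
  - intros a Ha.
    destruct (SD (a/2) ltac:(lra)) as [N0 [HN0 HSD]].
    destruct (large (a/2) (K*K) ltac:(lra)) as [N1 [HN1 HL]].
    exists (Nat.max N0 N1). split; [lia|].
    intros x y Hx Hxy HNy.
    pose proof (HSD x y Hx Hxy ltac:(lia)) as H1.
    pose proof (HL y ltac:(lia)) as H2.
    destruct (Hb x ltac:(lia)) as [Hx1 Hx2].
    destruct (Hb y ltac:(lia)) as [Hy1 Hy2].
    pose proof (Pg x Hx). pose proof (Ph x Hx).
    assert (Ey : Rpower (INR y) a = Rpower (INR y) (a/2) * Rpower (INR y) (a/2))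
      by (rewrite <- Rpower_plus; f_equal; lra).
    remember (Rpower (INR y) (a/2)) as P eqn:EP in *.
    assert (HP : 0 < P) by (rewrite EP; apply Rpower_pos').
    rewrite Ey.
    assert (g x / P <= K * h y) by lra.
    unfold Rdiv in *.
    rewrite Rinv_mult.
    apply Rle_trans with (K * g x * / P * / P).
    + assert (h x * / P * / P <= K * g x * / P * / P).
      { apply Rmult_le_compat_r; [left; apply Rinv_0_lt_compat; lra|].
        apply Rmult_le_compat_r; [left; apply Rinv_0_lt_compat; lra|]. lra. }
      lra.
    + assert (K * g x * / P * / P <= K * g x * / P * / (K*K)).
      { apply Rmult_le_compat_l.
        - apply Rmult_le_pos; [|left; apply Rinv_0_lt_compat; lra].
          pose proof (Pg x Hx). nra.
        - apply Rinv_le_contravar; nra. }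
      assert (K * g x * / P * / (K*K) = / K * (g x * / P)) by (field; lra).
      assert (/ K * (g x * / P) <= / K * (K * h y)).
      { apply Rmult_le_compat_l; [left; apply Rinv_0_lt_compat; lra|lra]. }
      assert (/ K * (K * h y) = h y) by (field; lra).
      lra.
  - intros a Ha.
    destruct (SJ (a/2) ltac:(lra)) as [N0 [HN0 HSJ]].
    destruct (large (a/2) (K*K) ltac:(lra)) as [N1 [HN1 HL]].
    exists (Nat.max N0 (2*N1)). split; [lia|].
    intros x y Hx Hxy HNy.
    pose proof (HSJ x y Hx Hxy ltac:(lia)) as H1.
    remember ((y / x)%nat) as q eqn:Eq in *.
    assert (Hq1 : (1 <= q)%nat).
    { rewrite Eq. apply Nat.div_le_lower_bound; lia. }
    assert (Hqx : (N1 <= q * x)%nat).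
    { pose proof (Nat.div_mod y x ltac:(lia)). pose proof (Nat.mod_upper_bound y x ltac:(lia)).
      rewrite <- Eq in H. nia. }
    pose proof (HL (q*x)%nat Hqx) as H2.
    rewrite mult_INR, <- Rpower_mult_distr in H2.
    2:{ apply lt_0_INR; lia. } 2:{ apply lt_0_INR; lia. }
    destruct (Hb x ltac:(lia)) as [Hx1 Hx2].
    destruct (Hb y ltac:(lia)) as [Hy1 Hy2].
    pose proof (Pg x Hx). pose proof (Ph x Hx).
    replace (2 + a) with ((2 + a/2) + a/2) by lra.
    replace a with (a/2 + a/2) at 3 by lra.
    rewrite !Rpower_plus.
    remember (Rpower (INR q) (2 + a/2)) as A eqn:EA in *.
    remember (Rpower (INR q) (a/2)) as Q eqn:EQ in *.
    remember (Rpower (INR x) (a/2)) as X eqn:EX in *.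
    assert (0 < A) by (rewrite EA; apply Rpower_pos').
    assert (0 < Q) by (rewrite EQ; apply Rpower_pos').
    assert (0 < X) by (rewrite EX; apply Rpower_pos').
    assert (0 < A * X) by nra.
    assert (G3 : h y <= K * (A * X * g x)).
    { nra. }
    assert (G4 : K * (A * X * g x) <= K * K * (A * X * h x)).
    { assert (A * X * g x <= A * X * (K * h x)) by (apply Rmult_le_compat_l; lra). nra. }
    assert (G5 : K * K * (A * X * h x) <= Q * X * (A * X * h x)).
    { apply Rmult_le_compat_r; [nra|lra]. }
    assert (EA2 : A = Rpower (INR q) 2 * Q) by (rewrite EA, EQ; apply Rpower_plus).
    replace (Rpower (INR q) 2 * Q * Q * (X * X) * h x) with (Q * X * (A * X * h x)) by (rewrite EA2; ring).
    lra.
Qed.
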